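(* Let $n\ge 1$. An element $A=(A_1,\dots,A_n)\in V_n$ is similar to an upper triangular $n$-matrix if and only if for all triples $1\le j,k,l\le n$, the triple $(A_j,A_k,A_l)\in V_3$ is similar to an upper triangular $3$-matrix.
   Context: $V_n=(M_{2\times2}(\mathbb{C}))^{\times n}$ with $GL(2,\mathbb{C})$ acting by simultaneous conjugation $g\cdot A=(gA_1g^{-1},\dots,gA_ng^{-1})$; two elements are similar if they lie in the same orbit. An $n$-matrix $A$ is upper triangular if every component $A_j$ is an upper triangular matrix. *)

(* Defs.v *)
From HB Require Import structures.
From mathcomp Require Import all_boot all_order all_algebra.
From mathcomp Require Import complex.
From mathcomp Require Import Rstruct.
Set Implicit Arguments. Unset Strict Implicit. Unset Printing Implicit Defensive.
Import Order.TTheory GRing.Theory Num.Theory.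
Local Open Scope ring_scope.

Definition CC : Type := complex Rdefinitions.R.

(* An n-matrix: an element of V_n = (M_2(C))^n. *)
Definition nmatrix (n : nat) := 'I_n -> 'M[CC]_2.

Definition upper_tri (M : 'M[CC]_2) : Prop :=
  forall i j : 'I_2, (j < i)%N -> M i j = 0.

Definition upper_tri_n (n : nat) (A : nmatrix n) : Prop :=
  forall j, upper_tri (A j).

Definition conj_n (n : nat) (g : 'M[CC]_2) (A : nmatrix n) : nmatrix n :=
  fun j => g *m A j *m invmx g.

Definition similar_to_upper (n : nat) (A : nmatrix n) : Prop :=
  exists g : 'M[CC]_2, g \in unitmx /\ upper_tri_n (conj_n g A).

Definition triple (a b c : 'M[CC]_2) : nmatrix 3 :=
  fun i => if val i == 0%N then a else if val i == 1%N then b else c.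

(* Main.v *)
Require Import Defs.
From mathcomp Require Import all_boot all_order all_algebra.
From mathcomp Require Import ring complex Rstruct.
Set Implicit Arguments. Unset Strict Implicit. Unset Printing Implicit Defensive.
Import GRing.Theory.
Local Open Scope ring_scope.

Lemma sum2 (R : nmodType) (F : 'I_2 -> R) : \sum_i F i = F 0 + F 1.
Proof. by rewrite big_ord_recl big_ord1; congr (_ + F _); apply: val_inj. Qed.

Lemma mul2 (R : pzRingType) (M N : 'M[R]_2) (i j : 'I_2) : (M *m N) i j = M i 0 * N 0 j + M i 1 * N 1 j.
Proof. by rewrite mxE sum2. Qed.

Definition mk2 (a b c d : CC) : 'M[CC]_2 :=
  \matrix_(i < 2, j < 2) if (i == 0 :> nat) then (if (j == 0 :> nat) then a else b)
                         else (if (j == 0 :> nat) then c else d).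

Lemma mk2E a b c d : [/\ mk2 a b c d 0 0 = a, mk2 a b c d 0 1 = b,
   mk2 a b c d 1 0 = c & mk2 a b c d 1 1 = d].
Proof. by rewrite !mxE. Qed.

Lemma eq2 (M N : 'M[CC]_2) : M 0 0 = N 0 0 -> M 0 1 = N 0 1 -> M 1 0 = N 1 0 -> M 1 1 = N 1 1 -> M = N.
Proof.
move=> e00 e01 e10 e11; apply/matrixP => i j.
have hi : i = 0 \/ i = 1 by case: i => [[|[|i]] Hi]; [left|right|]; try apply: val_inj.
have hj : j = 0 \/ j = 1 by case: j => [[|[|j]] Hj]; [left|right|]; try apply: val_inj.
by case: hi => ->; case: hj => ->.
Qed.

Definition QF (F : fieldType) (a b c x y : F) := a * y ^+ 2 + b * (x * y) - c * x ^+ 2.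
Definition crs (F : fieldType) (x1 y1 x2 y2 : F) := x1 * y2 - x2 * y1.

Lemma three_zeros (F : fieldType) (a b c x1 y1 x2 y2 x3 y3 x y : F) :
  QF a b c x1 y1 = 0 -> QF a b c x2 y2 = 0 -> QF a b c x3 y3 = 0 ->
  crs x1 y1 x2 y2 != 0 -> crs x1 y1 x3 y3 != 0 -> crs x2 y2 x3 y3 != 0 ->
  QF a b c x y = 0.
Proof.
move=> e1 e2 e3 n12 n13 n23.
set p1 := y1 ^+ 2; set p2 := y2 ^+ 2; set p3 := y3 ^+ 2.
set q1 := x1 * y1; set q2 := x2 * y2; set q3 := x3 * y3.
set s1 := - x1 ^+ 2; set s2 := - x2 ^+ 2; set s3 := - x3 ^+ 2.
have key : QF a b c x y * (crs x1 y1 x2 y2 * crs x1 y1 x3 y3 * crs x2 y2 x3 y3) =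
  (y ^+ 2 * (q2 * s3 - s2 * q3) + x * y * (s2 * p3 - p2 * s3) - x ^+ 2 * (p2 * q3 - q2 * p3)) * QF a b c x1 y1
+ (y ^+ 2 * (s1 * q3 - q1 * s3) + x * y * (p1 * s3 - s1 * p3) - x ^+ 2 * (q1 * p3 - p1 * q3)) * QF a b c x2 y2
+ (y ^+ 2 * (q1 * s2 - s1 * q2) + x * y * (s1 * p2 - p1 * s2) - x ^+ 2 * (p1 * q2 - q1 * p2)) * QF a b c x3 y3.
  rewrite /QF /crs /p1 /p2 /p3 /q1 /q2 /q3 /s1 /s2 /s3; ring.
move: key; rewrite e1 e2 e3 !mulr0 !addr0 => /eqP.
have hD : crs x1 y1 x2 y2 * crs x1 y1 x3 y3 * crs x2 y2 x3 y3 != 0 by rewrite !mulf_neq0.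
by rewrite mulf_eq0 (negbTE hD) orbF => /eqP.
Qed.

Lemma par_zero (F : fieldType) (a b c x1 y1 x2 y2 : F) :
  (x1 != 0) || (y1 != 0) -> crs x1 y1 x2 y2 = 0 -> QF a b c x1 y1 = 0 -> QF a b c x2 y2 = 0.
Proof.
move=> nz k e.
have hx : QF a b c x2 y2 * x1 ^+ 2 = QF a b c x1 y1 * x2 ^+ 2 + crs x1 y1 x2 y2 * (a * (y2 * x1 + y1 * x2) + b * x1 * x2).
  rewrite /QF /crs; ring.
have hy : QF a b c x2 y2 * y1 ^+ 2 = QF a b c x1 y1 * y2 ^+ 2 - crs x1 y1 x2 y2 * (b * y1 * y2 - c * (x2 * y1 + x1 * y2)).
  rewrite /QF /crs; ring.
rewrite e k !mul0r addr0 subr0 in hx hy.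
case/orP: nz => nz.
  by move/eqP: hx; rewrite mulf_eq0 expf_eq0 (negbTE nz) andbF orbF => /eqP.
by move/eqP: hy; rewrite mulf_eq0 expf_eq0 (negbTE nz) andbF orbF => /eqP.
Qed.

Definition Qm (M : 'M[complex Rdefinitions.R]_2) (x y : complex Rdefinitions.R) :=
  QF (M 0 1) (M 0 0 - M 1 1) (M 1 0) x y.
Definition comvec n (A : nmatrix n) := exists x y : complex Rdefinitions.R,
  ((x != 0) || (y != 0)) /\ forall j, Qm (A j) x y = 0.

Lemma L1 n (A : nmatrix n) : similar_to_upper A -> comvec A.
Proof.
move=> [g [gu hup]].
set h := invmx g.
have hg : h *m g = 1%:M by rewrite mulVmx.
have gh : g *m h = 1%:M by rewrite mulmxV.
exists (h 0 0), (h 1 0); split.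
  move: (congr1 (fun M : 'M_2 => M 0 0) gh) => /=.
  rewrite mul2 mxE /=.
  case: (h 0 0 =P 0) => [->|] /=; last by [].
  case: (h 1 0 =P 0) => [->|] /=; last by [].
  by rewrite !mulr0 addr0 => /esym/eqP; rewrite oner_eq0.
move=> j.
have e : A j *m h = h *m (g *m A j *m h) by rewrite !mulmxA hg mul1mx.
have U : (g *m A j *m h) 1 0 = 0 by apply: (hup j); rewrite /=.
set u := (g *m A j *m h) 0 0.
have e0 : A j 0 0 * h 0 0 + A j 0 1 * h 1 0 = h 0 0 * u.
  by rewrite -(mul2 (A j) h) e mul2 U mulr0 addr0.
have e1 : A j 1 0 * h 0 0 + A j 1 1 * h 1 0 = h 1 0 * u.
  by rewrite -(mul2 (A j) h) e mul2 U mulr0 addr0.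
rewrite /Qm /QF.
have -> : A j 0 1 * h 1 0 ^+ 2 + (A j 0 0 - A j 1 1) * (h 0 0 * h 1 0) - A j 1 0 * h 0 0 ^+ 2
  = (A j 0 0 * h 0 0 + A j 0 1 * h 1 0) * h 1 0 - (A j 1 0 * h 0 0 + A j 1 1 * h 1 0) * h 0 0 by ring.
rewrite e0 e1; ring.
Qed.

Lemma upper_of (M : 'M[complex Rdefinitions.R]_2) : M 1 0 = 0 -> upper_tri M.
Proof.
move=> H i j.
case: i => [[|[|i]] Hi] //; case: j => [[|j] Hj] //= _.
by rewrite -H; congr (M _ _); apply: val_inj.
Qed.

Lemma L2 n (A : nmatrix n) : comvec A -> similar_to_upper A.
Proof.
move=> [x [y [nz hQ]]].
have main : forall g h : 'M[complex Rdefinitions.R]_2, g *m h = 1%:M ->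
   (forall j, (g *m A j *m h) 1 0 = 0) -> similar_to_upper A.
  move=> g h gh H; have [gu _] := mulmx1_unit gh.
  have hi : h = invmx g by rewrite -[h]mul1mx -(mulVmx gu) -mulmxA gh mulmx1.
  rewrite hi in H.
  exists g; split => // j; apply: upper_of; exact: H.
case: (x =P 0) => [x0|/eqP xn0].
  have yn0 : y != 0 by move: nz; rewrite x0 eqxx.
  apply: (main (mk2 0 y^-1 1 0) (mk2 0 1 y 0)).
    apply: eq2; rewrite !mul2 !mxE /=; field. all: try exact: yn0; try done.
  move=> j; have := hQ j; rewrite /Qm /QF x0 !mul2.
  rewrite /mk2 !mxE /=.
  move=> E.
  have : A j 0 1 * y * y = 0 by rewrite -E; ring.
  move/eqP; rewrite !mulf_eq0 (negbTE yn0) !orbF => /eqP h01.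
  rewrite h01; ring.
apply: (main (mk2 x^-1 0 (- y / x) 1) (mk2 x 0 y 1)).
  apply: eq2; rewrite !mul2 !mxE /=; field. all: try exact: xn0; try done.
move=> j; have := hQ j; rewrite /Qm /QF !mul2.
rewrite /mk2 !mxE /=.
move=> E.
have -> : (- y / x * A j 0 0 + 1 * A j 1 0) * x + (- y / x * A j 0 1 + 1 * A j 1 1) * y
  = - (A j 0 1 * y ^+ 2 + (A j 0 0 - A j 1 1) * (x * y) - A j 1 0 * x ^+ 2) / x.
  by field.
by rewrite E oppr0 mul0r.
Qed.

Lemma crsC (x1 y1 x2 y2 : complex Rdefinitions.R) : crs x1 y1 x2 y2 = - crs x2 y2 x1 y1.
Proof. rewrite /crs; ring. Qed.

Lemma trip n (A : nmatrix n) j k l : similar_to_upper (triple (A j) (A k) (A l)) ->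
  exists x y, ((x != 0) || (y != 0)) /\ [/\ Qm (A j) x y = 0, Qm (A k) x y = 0 & Qm (A l) x y = 0].
Proof.
move/L1 => [x [y [nz H]]]; exists x, y; split => //.
split; [exact: (H (@Ordinal 3 0 isT)) | exact: (H (@Ordinal 3 1 isT)) | exact: (H (@Ordinal 3 2 isT))].
Qed.

Theorem theorem2p7 (n : nat) (hn : (1 <= n)%N) (A : nmatrix n) :
  similar_to_upper A <->
  (forall j k l : 'I_n, similar_to_upper (triple (A j) (A k) (A l))).
Proof.
split.
  move=> [g [gu hup]] j k l; exists g; split=> // i; rewrite /conj_n /triple.
  case: ifP => _; first exact: hup.
  by case: ifP => _; exact: hup.
move=> H; apply: L2.
pose k0 := Ordinal hn.
have [x1 [y1 [nz1 [e1 _ _]]]] := trip (H k0 k0 k0).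
case: (boolP [forall j, Qm (A j) x1 y1 == 0]) => [/forallP F|].
  by exists x1, y1; split => // j; apply/eqP.
rewrite negb_forall => /existsP [a na].
have [x2 [y2 [nz2 [e2 _ _]]]] := trip (H a a a).
case: (boolP [forall j, Qm (A j) x2 y2 == 0]) => [/forallP F|].
  by exists x2, y2; split => // j; apply/eqP.
rewrite negb_forall => /existsP [b nb].
have [x3 [y3 [nz3 [e3 f3 _]]]] := trip (H a b b).
case: (boolP [forall j, Qm (A j) x3 y3 == 0]) => [/forallP F|].
  by exists x3, y3; split => // j; apply/eqP.
rewrite negb_forall => /existsP [c nc].
have [x4 [y4 [nz4 [e4 f4 g4]]]] := trip (H a b c).
case: (crs x2 y2 x3 y3 =P 0) => [k23|/eqP k23].
  have k32 : crs x3 y3 x2 y2 = 0 by rewrite crsC k23 oppr0.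
  by move: nb; rewrite /Qm (par_zero nz3 k32 f3) eqxx.
case: (crs x3 y3 x4 y4 =P 0) => [k34|/eqP k34].
  have k43 : crs x4 y4 x3 y3 = 0 by rewrite crsC k34 oppr0.
  by move: nc; rewrite /Qm (par_zero nz4 k43 g4) eqxx.
case: (crs x2 y2 x4 y4 =P 0) => [k24|/eqP k24].
  have k42 : crs x4 y4 x2 y2 = 0 by rewrite crsC k24 oppr0.
  by move: nb; rewrite /Qm (par_zero nz4 k42 f4) eqxx.
have k43 : crs x4 y4 x3 y3 != 0 by rewrite crsC oppr_eq0.
by move: na; rewrite /Qm (three_zeros x1 y1 e2 e3 e4 k23 k24 k34) eqxx.
Qed.
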